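(* Let $n,r$ be integers with $n\ge r+2\ge 2$. There is a constant $C>0$ such that for all $v,w\in F_r=F(t_1,\dots,t_r)$ and all $i\in\{1,\dots,n-1\}$ such that either $v\in[F_r,F_r]$ or $i\in\{r+1,\dots,n-1\}$, we have $$\mathrm{Area}\Big(\big[w(X^{(i)}),v(\Delta)\big]\,\big[w(\Delta),v(\Delta)\big]^{-1}\Big)\le C\cdot\max\{|w|^2,|v|^2\}.$$
   Context: For $\alpha\in\{1,\dots,n\}$ let $F^{(\alpha)}$ be the free group on $a^{(\alpha)}_1,\dots,a^{(\alpha)}_r$, let $\psi\colon F^{(1)}\times\cdots\times F^{(n)}\to\mathbb Z^r$ send each $a^{(\alpha)}_j$ to $e_j$, and $K=\ker\psi$. For $\alpha\in\{1,\dots,n-1\}$, $j\in\{1,\dots,r\}$, $x^{(\alpha)}_j=a^{(\alpha)}_j(a^{(n)}_j)^{-1}$; $X^{(\alpha)}=(x^{(\alpha)}_1,\dots,x^{(\alpha)}_r)$; $X$ is the set of all $x^{(\alpha)}_j$ and $F(X)$ the abstract free group on it; $\Delta=(x^{(1)}_1,\dots,x^{(r)}_r)$. For $w\in F_r$ and a tuple $S=(s_1,\dots,s_r)$ in $F(X)$, $w(S)$ is the image of $w$ under $t_i\mapsto s_i$; $|w|$ is word length in $F_r$. $[g,h]=ghg^{-1}h^{-1}$. Let $\mathcal R=\mathcal R_1\cup\mathcal R_2$ with $\mathcal R_1=\{[x^{(\alpha)}_i,x^{(\beta)}_i]:\alpha\ne\beta\}$, $\mathcal R_2=\{[x^{(\alpha)}_i,x^{(\beta)}_j(x^{(\gamma)}_j)^{-1}]: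 i\neq j,\ \alpha,\beta,\gamma\in\{1,\dots,n-1\}\text{ pairwise distinct}\}$ (defining relators of $K$ on $X$). $\mathrm{Area}(u)$ for $u\in F(X)$ is the least number of conjugates of elements of $\mathcal R^{\pm1}$ whose product equals $u$ in $F(X)$. *)

(* Defs.v *)
From mathcomp Require Import all_boot.
Set Implicit Arguments. Unset Strict Implicit. Unset Printing Implicit Defensive.

(* A word over generators of type T: a letter (a, b) is a^{-1} if b = true, else a. *)
Definition word (T : eqType) := seq (T * bool).

Section Free.
Variable T : eqType.

Definition freduce (w : word T) : word T :=
  foldr (fun x acc => match acc with
                      | y :: t => if (y.1 == x.1) && (y.2 != x.2) then t else x :: acc
                      | [::] => [:: x] end) [::] w.

Definition feq (u v : word T) : Prop := freduce u = freduce v.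

Definition winv (w : word T) : word T := rev (map (fun x => (x.1, ~~ x.2)) w).

Definition wcomm (g h : word T) : word T := g ++ h ++ winv g ++ winv h.

End Free.

(* Elements of F_r = F(t_1,...,t_r): words over nat, letter index j stands for t_{j+1};
   valid iff all indices are < r. *)
Definition Fr_word (r : nat) (w : word nat) : bool := all (fun x => x.1 < r) w.

Definition wlen (w : word nat) : nat := size (freduce w).

Definition in_comm_Fr (r : nat) (v : word nat) : Prop :=
  exists l : seq (word nat * word nat),
    all (fun p => Fr_word r p.1 && Fr_word r p.2) l /\
    feq v (flatten [seq wcomm p.1 p.2 | p <- l]).

(* Generators of X: x^{(a)}_j is the pair (a, j) (0-based: a stands for alpha = a+1,
   j for index j+1); valid iff a < n-1 and j < r. *)
Definition Xgen : eqType := (nat * nat)%type.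
Definition X_word (n r : nat) (w : word Xgen) : bool :=
  all (fun x => (x.1.1 < n.-1) && (x.1.2 < r)) w.

Definition xg (a j : nat) : word Xgen := [:: ((a, j), false)].

Definition wsubst (S : nat -> word Xgen) (w : word nat) : word Xgen :=
  flatten [seq (if x.2 then winv (S x.1) else S x.1) | x <- w].

Definition Xtuple (i : nat) : nat -> word Xgen := fun j => xg i j.
Definition Delta : nat -> word Xgen := fun j => xg j j.

Definition is_relator (n r : nat) (rho : word Xgen) : Prop :=
  (exists a b i, [/\ a < n.-1, b < n.-1, i < r, a != b &
                    rho = wcomm (xg a i) (xg b i)]) \/
  (exists a b c i j, [/\ [/\ a < n.-1, b < n.-1, c < n.-1 & i < r], j < r, i != j,
                    [/\ a != b, b != c & a != c] &
                    rho = wcomm (xg a i) (xg b j ++ winv (xg c j))]).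

(* Area(u) <= N : u equals in F(X) a product of at most N conjugates of relators^{+-1} *)
Definition area_le (n r : nat) (u : word Xgen) (N : nat) : Prop :=
  exists l : seq (word Xgen * word Xgen * bool),
    [/\ size l <= N,
        all (fun t => X_word n r t.1.1) l,
        (forall t, t \in l -> is_relator n r t.1.2) &
        feq u (flatten [seq t.1.1 ++ (if t.2 then winv t.1.2 else t.1.2) ++ winv t.1.1 | t <- l])].

(* Main.v *)
From Stdlib Require Import Lia ZArith.
Require Import Defs.
From mathcomp Require Import all_boot.
From mathcomp Require Import zify.
Set Implicit Arguments. Unset Strict Implicit. Unset Printing Implicit Defensive.

Section FreeG.
Variable T : eqType.
Implicit Types (u v w acc s : word T) (x y : T * bool).

Definition fc x acc : word T := match acc with
  | y :: t => if (y.1 == x.1) && (y.2 != x.2) then t else x :: acc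
  | [::] => [:: x] end.

Lemma freduceE w : freduce w = foldr fc [::] w.
Proof. by []. Qed.

Fixpoint red s : bool := match s with
  | x :: ((y :: _) as t) => ~~ ((y.1 == x.1) && (y.2 != x.2)) && red t
  | _ => true end.

Lemma red_cons x s : red (x :: s) -> red s.
Proof. by case: s => //= y t /andP[]. Qed.

Lemma fc_red x acc : red acc -> red (fc x acc).
Proof.
case: acc => [|y t] //= H.
case: ifP => C; first exact: red_cons H.
by rewrite /= C.
Qed.

Lemma foldr_red acc u : red acc -> red (foldr fc acc u).
Proof. by move=> H; elim: u => //= x u IH; apply: fc_red. Qed.

Lemma fc_inv x acc : red acc -> fc x (fc (x.1, ~~ x.2) acc) = acc.
Proof.
case: x => a b; case: acc => [|[c d] t] /=.
  by rewrite eqxx; case: b.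
move=> H.
case E: ((c == a) && (d != ~~ b)).
  move/andP: E => [/eqP Ec E2]; subst c.
  have Ed : d = b by move: E2; clear H; case: b; case: d.
  subst d.
  case: t H => [|[e f] t'] //= /andP[H1 _].
  by rewrite (negbTE H1).
by rewrite /= eqxx; clear E; case: b.
Qed.

Lemma foldr_fc acc x s : red acc ->
  foldr fc acc (fc x s) = fc x (foldr fc acc s).
Proof.
move=> Hacc; case: s => [|y t] //=.
case: ifP => C //.
move/andP: C => [/eqP E1 E2].
have -> : y = (x.1, ~~ x.2) by case: y E1 E2 => a b /= ->; case: b; case: x.2.
by rewrite /= fc_inv //; apply: foldr_red.
Qed.

Lemma foldr_fr acc u : red acc -> foldr fc acc u = foldr fc acc (freduce u).
Proof.
move=> H; elim: u => //= x u IH.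
by rewrite IH foldr_fc.
Qed.

Lemma fr_cat u v : freduce (u ++ v) = foldr fc (freduce v) (freduce u).
Proof.
rewrite /freduce foldr_cat -!/(freduce _) -/fc.
rewrite [LHS](@foldr_fr (freduce v) u) //.
exact: foldr_red.
Qed.

Lemma feq_cat u u' v v' : feq u u' -> feq v v' -> feq (u ++ v) (u' ++ v').
Proof. by rewrite /feq !fr_cat => -> ->. Qed.

Lemma winv_cat u v : winv (u ++ v) = winv v ++ winv u.
Proof. by rewrite /winv map_cat rev_cat. Qed.

Lemma winvK u : winv (winv u) = u.
Proof.
rewrite /winv map_rev revK -map_comp map_id_in // => [[a b]] _ /=.
by rewrite negbK.
Qed.

Lemma size_winv u : size (winv u) = size u.
Proof. by rewrite /winv size_rev size_map. Qed.

Lemma winv_cons x u : winv (x :: u) = winv u ++ [:: (x.1, ~~ x.2)].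
Proof. by rewrite /winv /= rev_cons cats1. Qed.

Lemma foldr_inv acc u : red acc -> foldr fc acc (u ++ winv u) = acc.
Proof.
elim: u acc => //= x u IH acc H.
rewrite winv_cons catA foldr_cat /= IH ?fc_inv //.
exact: fc_red.
Qed.

Lemma fr_inv u : freduce (u ++ winv u) = [::].
Proof. exact: foldr_inv. Qed.

Lemma fr_inv' u : freduce (winv u ++ u) = [::].
Proof. by rewrite -{2}(winvK u) fr_inv. Qed.

Lemma canc1 (a c b : word T) : freduce (a ++ c ++ winv c ++ b) = freduce (a ++ b).
Proof. by rewrite (catA c) (fr_cat a) (fr_cat (c ++ winv c)) fr_inv /= -fr_cat. Qed.

Lemma canc2 (a c b : word T) : freduce (a ++ winv c ++ c ++ b) = freduce (a ++ b).
Proof. by rewrite -{2}(winvK c) canc1. Qed.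

Lemma canc1r (a c : word T) : freduce (a ++ c ++ winv c) = freduce a.
Proof. by rewrite -[c ++ winv c]cats0 -catA canc1 cats0. Qed.

Lemma canc2r (a c : word T) : freduce (a ++ winv c ++ c) = freduce a.
Proof. by rewrite -[winv c ++ c]cats0 -catA canc2 cats0. Qed.

Lemma canc1_0 (c b : word T) : freduce (c ++ winv c ++ b) = freduce b.
Proof. exact: (canc1 [::]). Qed.
Lemma canc2_0 (c b : word T) : freduce (winv c ++ c ++ b) = freduce b.
Proof. exact: (canc2 [::]). Qed.
Lemma canc1_2 (a1 a2 c b : word T) : freduce (a1 ++ a2 ++ c ++ winv c ++ b) = freduce (a1 ++ a2 ++ b).
Proof. by rewrite catA canc1 -catA. Qed.
Lemma canc2_2 (a1 a2 c b : word T) : freduce (a1 ++ a2 ++ winv c ++ c ++ b) = freduce (a1 ++ a2 ++ b).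
Proof. by rewrite catA canc2 -catA. Qed.
Lemma canc1_3 (a1 a2 a3 c b : word T) : freduce (a1 ++ a2 ++ a3 ++ c ++ winv c ++ b) = freduce (a1 ++ a2 ++ a3 ++ b).
Proof. by rewrite catA canc1_2 -catA. Qed.
Lemma canc2_3 (a1 a2 a3 c b : word T) : freduce (a1 ++ a2 ++ a3 ++ winv c ++ c ++ b) = freduce (a1 ++ a2 ++ a3 ++ b).
Proof. by rewrite catA canc2_2 -catA. Qed.
Lemma canc1_4 (a1 a2 a3 a4 c b : word T) : freduce (a1 ++ a2 ++ a3 ++ a4 ++ c ++ winv c ++ b) = freduce (a1 ++ a2 ++ a3 ++ a4 ++ b).
Proof. by rewrite catA canc1_3 -catA. Qed.
Lemma canc2_4 (a1 a2 a3 a4 c b : word T) : freduce (a1 ++ a2 ++ a3 ++ a4 ++ winv c ++ c ++ b) = freduce (a1 ++ a2 ++ a3 ++ a4 ++ b).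
Proof. by rewrite catA canc2_3 -catA. Qed.

Lemma feq_winv u v : feq u v -> feq (winv u) (winv v).
Proof.
move=> H.
have E1 : feq (winv u) (winv u ++ v ++ winv v).
  by rewrite /feq -{1}(cats0 (winv u)) -(canc1 (winv u) v [::]) cats0.
have E2 : feq (winv u ++ v ++ winv v) (winv u ++ u ++ winv v).
  by apply: feq_cat => //; apply: feq_cat.
rewrite /feq E1 E2 -{2}[winv v]cat0s.
by rewrite -[winv u ++ u ++ _]cat0s canc2.
Qed.

Lemma feq_nil_cat u v : feq u [::] -> feq (u ++ v) v.
Proof. by move=> H; rewrite -[v in X in feq _ X]cat0s; apply: feq_cat. Qed.

End FreeG.

Section Area.
Variables n r : nat.
Local Notation ar := (area_le n r).
Local Notation XW := (X_word n r).
Implicit Types (u v w c h : word Xgen).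

Definition cj (t : word Xgen * word Xgen * bool) : word Xgen :=
  t.1.1 ++ (if t.2 then winv t.1.2 else t.1.2) ++ winv t.1.1.

Lemma arE u N : ar u N <-> exists l : seq (word Xgen * word Xgen * bool),
    [/\ size l <= N, all (fun t => XW t.1.1) l,
        (forall t, t \in l -> is_relator n r t.1.2) &
        feq u (flatten (map cj l))].
Proof. by []. Qed.

Lemma XW_cat u v : XW (u ++ v) = XW u && XW v.
Proof. exact: all_cat. Qed.

Lemma XW_winv u : XW (winv u) = XW u.
Proof. by rewrite /X_word /winv all_rev all_map. Qed.

Lemma ar_feq u u' N : feq u u' -> ar u N -> ar u' N.
Proof. by move=> E /arE[l [H1 H2 H3 H4]]; apply/arE; exists l; split => //; rewrite /feq -E. Qed.

Lemma ar_le u N M : N <= M -> ar u N -> ar u M.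
Proof. by move=> le /arE[l [H1 H2 H3 H4]]; apply/arE; exists l; split => //; apply: leq_trans le. Qed.

Lemma ar_nil u : feq u [::] -> ar u 0.
Proof. by move=> E; apply/arE; exists [::]; split. Qed.

Lemma ar_cat u v N M : ar u N -> ar v M -> ar (u ++ v) (N + M).
Proof.
move=> /arE[l [H1 H2 H3 H4]] /arE[l' [H1' H2' H3' H4']]; apply/arE; exists (l ++ l'); split.
- by rewrite size_cat leq_add.
- by rewrite all_cat H2 H2'.
- by move=> t; rewrite mem_cat => /orP[]; [apply: H3 | apply: H3'].
- by rewrite map_cat flatten_cat; apply: feq_cat.
Qed.

Lemma ar_rel rho : is_relator n r rho -> ar rho 1.
Proof.
move=> H; apply/arE; exists [:: (([::], rho), false)]; split => //.
- by move=> t; rewrite inE => /eqP ->.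
- by rewrite /= /cj /= !cats0.
Qed.

Lemma flatten_conj c (ys : seq (word Xgen)) :
  feq (flatten [seq c ++ y ++ winv c | y <- ys]) (c ++ flatten ys ++ winv c).
Proof.
elim: ys => [|y ys IH] /=.
  by rewrite /feq -[c ++ _]cat0s fr_inv.
by rewrite /feq fr_cat IH -fr_cat -!catA (catA c y) canc2 -!catA.
Qed.

Lemma ar_conj c u N : XW c -> ar u N -> ar (c ++ u ++ winv c) N.
Proof.
move=> Xc /arE[l [H1 H2 H3 H4]]; apply/arE.
exists [seq ((c ++ t.1.1, t.1.2), t.2) | t <- l]; split.
- by rewrite size_map.
- by rewrite all_map; apply/allP => t tl /=; rewrite XW_cat Xc (allP H2).
- by move=> t /mapP[t0 t0l ->]; apply: (H3 t0 t0l).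
have -> : [seq cj t | t <- [seq ((c ++ t.1.1, t.1.2), t.2) | t <- l]] =
          [seq c ++ y ++ winv c | y <- [seq cj t | t <- l]].
  by rewrite -!map_comp; apply: eq_map => t; rewrite /cj /= winv_cat !catA.
rewrite /feq (flatten_conj c) !fr_cat.
by rewrite H4.
Qed.

Lemma winv_flatten (s : seq (word Xgen)) : winv (flatten s) = flatten (rev (map (fun x => winv x) s)).
Proof.
elim: s => //= x s IH; rewrite winv_cat IH rev_cons.
by rewrite -cats1 flatten_cat /= cats0.
Qed.

Lemma ar_inv u N : ar u N -> ar (winv u) N.
Proof.
move=> /arE[l [H1 H2 H3 H4]]; apply/arE.
exists (rev [seq ((t.1.1, t.1.2), ~~ t.2) | t <- l]); split.
- by rewrite size_rev size_map.
- by rewrite all_rev all_map; apply/allP => t tl /=; rewrite (allP H2).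
- by move=> t; rewrite mem_rev => /mapP[t0 t0l ->]; apply: (H3 t0 t0l).
rewrite map_rev -map_comp.
have -> : [seq (cj \o (fun t => (t.1.1, t.1.2, ~~ t.2))) i | i <- l] = [seq winv (cj t) | t <- l].
  apply: eq_map => t; rewrite /cj /= !winv_cat winvK !catA.
  by case: t.2; rewrite ?winvK.
rewrite map_comp -winv_flatten.
exact: feq_winv.
Qed.

Lemma ar_relinv rho : is_relator n r rho -> ar (winv rho) 1.
Proof. by move=> H; apply: ar_inv; apply: ar_rel. Qed.

End Area.

Section Eqv.
Variables n r : nat.
Local Notation ar := (area_le n r).
Local Notation XW := (X_word n r).
Implicit Types (u v w c h a b x y : word Xgen).

Definition eqv u v N := ar (u ++ winv v) N.
Definition cmm x y N := ar (wcomm x y) N.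

Lemma eqv_feq u v : feq u v -> eqv u v 0.
Proof.
move=> E; apply: ar_nil.
by rewrite /feq fr_cat E -fr_cat fr_inv.
Qed.

Lemma eqv_le u v N M : N <= M -> eqv u v N -> eqv u v M.
Proof. exact: ar_le. Qed.

Lemma eqv_trans u v w N M : eqv u v N -> eqv v w M -> eqv u w (N + M).
Proof.
move=> H1 H2; have := ar_cat H1 H2; apply: ar_feq.
by rewrite /feq -catA canc2.
Qed.

Lemma eqv_sym u v N : eqv u v N -> eqv v u N.
Proof. by move=> H; have := ar_inv H; rewrite /eqv winv_cat winvK. Qed.

Lemma eqv_catl c u v N : XW c -> eqv u v N -> eqv (c ++ u) (c ++ v) N.
Proof.
move=> Xc H; have := ar_conj Xc H; rewrite /eqv.
by rewrite winv_cat !catA.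
Qed.

Lemma eqv_catr c u v N : eqv u v N -> eqv (u ++ c) (v ++ c) N.
Proof.
move=> H; apply: ar_feq H.
by rewrite /feq /eqv winv_cat -catA canc1.
Qed.

Lemma eqv_winv u v N : XW u -> eqv u v N -> eqv (winv u) (winv v) N.
Proof.
move=> Xu H; have := ar_conj (c := winv u) _ (ar_inv H).
rewrite XW_winv => /(_ Xu); apply: ar_feq.
rewrite /eqv winvK winv_cat winvK -catA.
by rewrite /feq (catA (winv u) v) canc2r.
Qed.

Lemma eqv_feql u u' v N : feq u u' -> eqv u' v N -> eqv u v N.
Proof. by move=> E; apply: ar_feq; apply: feq_cat. Qed.

Lemma eqv_feqr u v v' N : feq v v' -> eqv u v' N -> eqv u v N.
Proof. by move=> E; apply: ar_feq; apply: feq_cat => //; apply: feq_winv. Qed.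

Lemma cmm_eqv x y N : cmm x y N -> eqv (x ++ y) (y ++ x) N.
Proof. by rewrite /cmm /eqv /wcomm winv_cat -!catA. Qed.

Lemma winv_wcomm x y : winv (wcomm x y) = wcomm y x.
Proof. by rewrite /wcomm !winv_cat !winvK -!catA. Qed.

Lemma cmm_sym x y N : cmm x y N -> cmm y x N.
Proof. by move=> H; have := ar_inv H; rewrite winv_wcomm. Qed.

Lemma cmm_nil x : cmm x [::] 0.
Proof. by apply: ar_nil; rewrite /feq /wcomm /= cats0 fr_inv. Qed.

Lemma cmm_cat x a b N M : XW a -> cmm x a N -> cmm x b M -> cmm x (a ++ b) (N + M).
Proof.
move=> Xa H1 H2; have := ar_cat H1 (ar_conj Xa H2); apply: ar_feq.
rewrite /feq /wcomm !winv_cat -!catA.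
by rewrite canc2_3 canc2_2.
Qed.

Lemma cmm_winvr x y N : XW y -> cmm x y N -> cmm x (winv y) N.
Proof.
move=> Xy H; have := ar_conj (c := winv y) _ (cmm_sym H).
rewrite XW_winv => /(_ Xy); apply: ar_feq.
by rewrite /feq /wcomm winvK -!catA canc2_0.
Qed.

Lemma cmm_winvl x y N : XW x -> cmm x y N -> cmm (winv x) y N.
Proof. by move=> Xx H; apply: cmm_sym; apply: cmm_winvr => //; apply: cmm_sym. Qed.

End Eqv.

Section Comm.
Variables n r : nat.
Local Notation ar := (area_le n r).
Local Notation XW := (X_word n r).
Local Notation eqv := (eqv n r).
Local Notation cmm := (cmm n r).
Implicit Types (u v w h x y : word Xgen).

Lemma XW_xg a k : a < n.-1 -> k < r -> XW (xg a k).
Proof. by move=> ha hk; rewrite /X_word /= ha hk. Qed.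

Lemma wcomm_triv x e : feq e [::] -> feq (wcomm x e) [::].
Proof.
move=> E.
have E2 : feq (wcomm x e) (x ++ [::] ++ winv x ++ [::]).
  apply: feq_cat => //; apply: feq_cat => //; apply: feq_cat => //.
  exact: (feq_winv E).
by rewrite /feq E2 /= cats0 fr_inv.
Qed.

Lemma cmm_self x : cmm x x 0.
Proof. by apply: ar_nil; rewrite /feq /wcomm canc1 fr_inv. Qed.

Lemma cmm_R1 a b k : a < n.-1 -> b < n.-1 -> k < r -> cmm (xg a k) (xg b k) 1.
Proof.
move=> ha hb hk; case: (eqVneq a b) => [<-|ne].
  exact: ar_le (cmm_self _).
by apply: ar_rel; left; exists a, b, k.
Qed.

Lemma CM a b c m k : a < n.-1 -> b < n.-1 -> c < n.-1 -> m < r -> k < r ->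
  [|| b == c, m == k | (a != b) && (a != c)] ->
  cmm (xg a m) (xg b k ++ winv (xg c k)) 2.
Proof.
move=> ha hb hc hm hk.
case: (eqVneq b c) => [<- _|nbc].
  by apply: (ar_le (N := 0)) => //; apply: ar_nil; apply: wcomm_triv; exact: (fr_inv (xg b k)).
rewrite orFb.
case: (eqVneq m k) => [<- _|nmk]; last rewrite orFb.
  rewrite -[2]/(1 + 1); apply: cmm_cat; first exact: XW_xg.
    exact: cmm_R1.
  by apply: cmm_winvr; [exact: XW_xg | exact: cmm_R1].
move=> /andP[nab nac].
apply: (ar_le (N := 1)) => //; apply: ar_rel; right.
by exists a, b, c, m, k; split.
Qed.

Lemma XW_letter (g : Xgen) s : XW [:: (g, s)] = XW [:: (g, false)].
Proof. by []. Qed.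

Lemma cmm_letters x h c (ok : pred Xgen) :
  (forall g, ok g -> XW [:: (g, false)] -> cmm x [:: (g, false)] c) ->
  all (fun z => ok z.1) h -> XW h -> cmm x h (c * size h).
Proof.
move=> Hok; elim: h => [|[g s] h IH] /=.
  by move=> _ _; rewrite muln0; apply: cmm_nil.
move=> /andP[og oh] /andP[Xg Xh].
rewrite mulnS -cat1s; apply: cmm_cat.
- by rewrite /X_word /= Xg.
  have Xg' : XW [:: (g, false)] by rewrite /X_word /= Xg.
  case: s; last exact: Hok.
  have -> : [:: (g, true)] = winv [:: (g, false)] by [].
  by apply: cmm_winvr => //; apply: Hok.
- exact: IH.
Qed.

Lemma all_winv (P : pred Xgen) u : all (fun z => P z.1) (winv u) = all (fun z => P z.1) u.
Proof. by rewrite /winv all_rev all_map. Qed.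

Lemma wsubst_cons (S : nat -> word Xgen) (x : nat * bool) (w : word nat) :
  wsubst S (x :: w) = (if x.2 then winv (S x.1) else S x.1) ++ wsubst S w.
Proof. by []. Qed.

Lemma all_wsubst (P : pred Xgen) (S : nat -> word Xgen) (w : word nat) :
  (forall k, k < r -> all (fun z => P z.1) (S k)) -> Fr_word r w ->
  all (fun z => P z.1) (wsubst S w).
Proof.
move=> HS; elim: w => //= [[k s] w] IH /andP[hk hw].
rewrite -/(wsubst S w) all_cat IH // andbT.
by case: s hk => /= hk; rewrite ?all_winv HS.
Qed.

Lemma XW_wsubst (S : nat -> word Xgen) (w : word nat) :
  (forall k, k < r -> XW (S k)) -> Fr_word r w -> XW (wsubst S w).
Proof.
move=> HS Hw; rewrite /X_word.
apply: (all_wsubst (P := fun g => (g.1 < n.-1) && (g.2 < r))) => // k hk.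
Qed.

Lemma size_wsubst (tau : nat -> nat) (w : word nat) :
  size (wsubst (fun k => xg (tau k) k) w) = size w.
Proof. by elim: w => //= [[k s] w] IH; rewrite -/(wsubst _ w) size_cat IH; case: s. Qed.

Lemma swap_pos Sk Tk G0 N :
  cmm (Sk ++ winv Tk) (Tk ++ G0 ++ winv Tk) N ->
  eqv (Sk ++ G0 ++ winv Sk) (Tk ++ G0 ++ winv Tk) N.
Proof.
apply: ar_feq.
rewrite /feq /wcomm !winv_cat !winvK -!catA canc2 canc2_2.
by [].
Qed.

Lemma swap_neg Sk Tk G0 N : XW Tk -> XW (Sk ++ winv Tk) ->
  cmm (Sk ++ winv Tk) G0 N ->
  eqv (winv Sk ++ G0 ++ Sk) (winv Tk ++ G0 ++ Tk) N.
Proof.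
move=> XT Xe H; have := ar_conj (c := winv Tk) _ (cmm_winvl Xe H).
rewrite XW_winv => /(_ XT); apply: ar_feq.
rewrite /feq /wcomm !winv_cat !winvK -!catA canc2_0.
by [].
Qed.

End Comm.

Section Swap.
Variables n r : nat.
Local Notation ar := (area_le n r).
Local Notation XW := (X_word n r).
Local Notation eqv := (eqv n r).
Local Notation cmm := (cmm n r).

Lemma swap (sigma tau : nat -> nat) (ok : pred Xgen) (c : nat) (w : word nat) (H : word Xgen) :
  (forall k, k < r -> sigma k < n.-1 /\ tau k < n.-1) ->
  (forall k g, k < r -> ok g -> XW [:: (g, false)] ->
     cmm (xg (sigma k) k ++ winv (xg (tau k) k)) [:: (g, false)] c) ->
  (forall k, k < r -> ok (tau k, k)) ->
  all (fun z => ok z.1) H -> XW H -> Fr_word r w ->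
  let S := fun k => xg (sigma k) k in
  let T := fun k => xg (tau k) k in
  eqv (wsubst S w ++ H ++ winv (wsubst S w)) (wsubst T w ++ H ++ winv (wsubst T w))
      (c * size w * (2 * size w + size H)).
Proof.
move=> Hv Hc Hok okH XH; elim: w => [|[k s] w IH] /=.
  by move=> _; rewrite muln0 mul0n; apply: eqv_feq.
move=> /andP[hk hw]; have {}IH := IH hw.
rewrite !wsubst_cons /=.
set Sw := wsubst (fun k0 => xg (sigma k0) k0) w; set Tw := wsubst (fun k0 => xg (tau k0) k0) w.
have [hs ht] := Hv k hk.
have XS : XW (xg (sigma k) k) by exact: XW_xg.
have XT : XW (xg (tau k) k) by exact: XW_xg.
have XTw : XW Tw by apply: (XW_wsubst (n := n) (r := r)) hw => j hj; apply: XW_xg => //; case: (Hv j hj).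
have XG0 : XW (Tw ++ H ++ winv Tw) by rewrite !XW_cat XW_winv XTw XH.
have oG0 : all (fun z => ok z.1) (Tw ++ H ++ winv Tw).
  have oTw : all (fun z => ok z.1) Tw.
    by apply: (all_wsubst (r := r)) hw => j hj; rewrite /= Hok.
  by rewrite !all_cat all_winv oTw okH.
have Hcm : forall W, all (fun z => ok z.1) W -> XW W ->
    cmm (xg (sigma k) k ++ winv (xg (tau k) k)) W (c * size W).
  by move=> W oW XW'; apply: (cmm_letters (ok := ok)) => // g og Xg; apply: Hc.
set LS := (if s then _ else _); set LT := (if s then _ else _).
have E2 : eqv (LS ++ (Tw ++ H ++ winv Tw) ++ winv LS) (LT ++ (Tw ++ H ++ winv Tw) ++ winv LT)
              (c * (2 * size w + size H + 2)).
  rewrite /LS /LT; clear LS LT; case: s.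
    rewrite !winvK; apply: (eqv_le (N := c * size (Tw ++ H ++ winv Tw))).
      by rewrite !size_cat size_winv /Tw size_wsubst leq_mul2l; apply/orP; right; lia.
    apply: swap_neg => //; first by rewrite XW_cat XS XW_winv.
    by apply: Hcm.
  apply: swap_pos.
  have -> : 2 * size w + size H + 2 = size (xg (tau k) k ++ (Tw ++ H ++ winv Tw) ++ winv (xg (tau k) k)).
    by rewrite !size_cat !size_winv /Tw size_wsubst /=; lia.
  apply: Hcm.
    by rewrite all_cat all_cat oG0 all_winv /= Hok.
  by rewrite XW_cat XW_cat XG0 XW_winv XT.
have XLS : XW LS by rewrite /LS; clear E2 LS LT; case: s; rewrite ?XW_winv.
have E1 : eqv (LS ++ (Sw ++ H ++ winv Sw) ++ winv LS) (LS ++ (Tw ++ H ++ winv Tw) ++ winv LS)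
              (c * size w * (2 * size w + size H)).
  by apply: eqv_catl => //; apply: eqv_catr.
have E := eqv_trans E1 E2.
apply: (eqv_le _ (eqv_feql _ (eqv_feqr _ E))).
- move: (size w) (size H) => a b; rewrite !mulnDr !mulnS !mulnDr; lia.
- by rewrite /feq !winv_cat -!catA.
- by rewrite /feq !winv_cat -!catA.
Qed.

End Swap.

Section Expsum.
Variable i : nat.

Definition ex (x : nat * bool) : Z := if x.1 == i then (if x.2 then (-1)%Z else 1%Z) else 0%Z.
Definition es (v : word nat) : Z := foldr (fun x acc => (ex x + acc)%Z) 0%Z v.

Lemma es_cons x v : es (x :: v) = (ex x + es v)%Z.
Proof. by []. Qed.

Lemma es_cat u v : es (u ++ v) = (es u + es v)%Z.
Proof. by elim: u => //= x u IH; rewrite -/(es _) IH; lia. Qed.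

Lemma es_winv u : es (winv u) = (- es u)%Z.
Proof.
elim: u => // x u IH; rewrite winv_cons es_cat IH es_cons.
rewrite es_cons.
have -> : ex (x.1, ~~ x.2) = (- ex x)%Z.
  by rewrite /ex /=; case: (x.1 == i); case: x.2.
rewrite /= /es /=; lia.
Qed.

Lemma es_fc x acc : es (fc x acc) = (ex x + es acc)%Z.
Proof.
case: acc => [|y t] //=.
case: ifP => // /andP[/eqP E1 E2].
rewrite -/(es t) /ex E1.
case: (x.1 == i); last by lia. move: E2; case: x.2; case: y.2 => // _; lia.
Qed.

Lemma es_fr v : es (freduce v) = es v.
Proof.
elim: v => //= x v IH; rewrite -/(freduce v) es_fc IH //.
Qed.

Lemma es_abs v : (Z.abs (es v) <= Z.of_nat (size v))%Z.
Proof.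
elim: v => //= x v IH; rewrite -/(es v) /ex.
case: (x.1 == i); case: x.2; lia.
Qed.

Lemma es_comm r v : in_comm_Fr r v -> es v = 0%Z.
Proof.
move=> [l [_ E]]; rewrite -es_fr E es_fr; clear E.
elim: l => //= p l IH; rewrite es_cat IH /wcomm !es_cat !es_winv; lia.
Qed.

End Expsum.

Section Pow.
Variables n r : nat.
Local Notation XW := (X_word n r).
Local Notation eqv := (eqv n r).
Local Notation cmm := (cmm n r).
Variable rho : word Xgen.

Definition ncat (k : nat) (x : word Xgen) : word Xgen := flatten (nseq k x).
Definition rp (z : Z) : word Xgen :=
  if (0 <=? z)%Z then ncat (Z.to_nat z) rho else ncat (Z.to_nat (- z)) (winv rho).

Lemma rp_succ z : feq (rho ++ rp z) (rp (1 + z)).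
Proof.
rewrite /rp; case: (Z.leb_spec 0 z) => hz; case: (Z.leb_spec 0 (1 + z)) => hz'; try lia.
  by have -> : Z.to_nat (1 + z) = (Z.to_nat z).+1 by lia.
  have -> : Z.to_nat (- z) = 1 by lia.
  have -> : Z.to_nat (1 + z) = 0 by lia.
  by rewrite /ncat /= /feq cats0 fr_inv.
have [k Ek] : exists k, Z.to_nat (- z) = k.+1 by exists (Z.to_nat (- z)).-1; lia.
rewrite Ek /= /feq -{1}(winvK rho) canc2_0.
by have -> : Z.to_nat (- (1 + z)) = k by lia.
Qed.

Lemma rp_pred z : feq (winv rho ++ rp z) (rp (-1 + z)).
Proof.
rewrite /rp; case: (Z.leb_spec 0 z) => hz; case: (Z.leb_spec 0 (-1 + z)) => hz'; try lia.
- have [k Ek] : exists k, Z.to_nat z = k.+1 by exists (Z.to_nat z).-1; lia.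
  rewrite Ek /ncat /= /feq canc2_0.
  by have -> : Z.to_nat (-1 + z) = k by lia.
- have -> : Z.to_nat z = 0 by lia.
  by have -> : Z.to_nat (- (-1 + z)) = 1 by lia.
- by have -> : Z.to_nat (- (-1 + z)) = (Z.to_nat (- z)).+1 by lia.
Qed.

Lemma XW_ncat k x : XW x -> XW (ncat k x).
Proof. by move=> Xx; elim: k => //= k IH; rewrite XW_cat Xx. Qed.

Lemma XW_rp z : XW rho -> XW (rp z).
Proof. by move=> X; rewrite /rp; case: ifP => _; apply: XW_ncat; rewrite ?XW_winv. Qed.

Lemma cmm_ncat y x N k : XW x -> cmm y x N -> cmm y (ncat k x) (N * k).
Proof.
move=> Xx H; elim: k => [|k IH]; first by rewrite muln0; apply: cmm_nil.
by rewrite mulnS; apply: cmm_cat.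
Qed.

Lemma cmm_rp y N z : XW rho -> cmm y rho N -> cmm y (rp z) (N * Z.abs_nat z).
Proof.
move=> X H; rewrite /rp; case: (Z.leb_spec 0 z) => hz.
  have -> : Z.abs_nat z = Z.to_nat z by lia.
  exact: cmm_ncat.
have -> : Z.abs_nat z = Z.to_nat (- z) by lia.
by apply: cmm_ncat; rewrite ?XW_winv //; apply: cmm_winvr.
Qed.

End Pow.

Section ELemma.
Variables n r i p : nat.
Hypotheses (hi : i < r) (hrp : r <= p) (hp : p < n.-1).
Local Notation XW := (X_word n r).
Local Notation eqv := (eqv n r).
Local Notation cmm := (cmm n r).

Definition tau' (m : nat) := if m == i then p else m.
Definition rho0 := xg i i ++ winv (xg p i).

Lemma hn : r < n.-1.
Proof. exact: leq_ltn_trans hrp hp. Qed.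

Lemma tau'_lt m : m < r -> tau' m < n.-1.
Proof. by rewrite /tau'; case: ifP => // _ hm; apply: ltn_trans hm hn. Qed.

Lemma XW_rho0 : XW rho0.
Proof. by rewrite /rho0 XW_cat XW_winv !XW_xg //; apply: ltn_trans hi hn. Qed.

Lemma cmm_letter_rho k : k < r -> cmm (xg (tau' k) k) rho0 2.
Proof.
move=> hk; apply: CM => //; first exact: tau'_lt.
- exact: ltn_trans hi hn.
rewrite /tau'; case: (eqVneq k i) => [_|nki]; first by rewrite orbT.
have nip : i != p by rewrite neq_ltn (leq_trans hi hrp).
have nkp : k != p by rewrite neq_ltn (leq_trans hk hrp).
by rewrite (negbTE nip) nki nkp.
Qed.

Lemma feq_refl' (u : word Xgen) : feq u u.
Proof. by []. Qed.

Lemma Elem (v : word nat) : Fr_word r v ->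
  eqv (wsubst Delta v) (rp rho0 (es i v) ++ wsubst (fun k => xg (tau' k) k) v)
      (2 * size v * size v).
Proof.
elim: v => [|[k s] v IH].
  by move=> _; apply: eqv_feq.
move=> /andP[/= hk hv]; have {}IH := IH hv.
rewrite !wsubst_cons.
set Dv := wsubst Delta v; set Tv := wsubst (fun k0 => xg (tau' k0) k0) v.
set e0 := es i v.
have XTv : XW Tv by apply: (XW_wsubst (n := n) (r := r)) hv => j hj; apply: XW_xg => //; apply: tau'_lt.
have hkn : k < n.-1 by apply: ltn_trans hk hn.
have hin : i < n.-1 by apply: ltn_trans hi hn.
have hpi : XW (xg p i) by apply: XW_xg.
have Hab : Z.abs_nat e0 <= @size (nat * bool) v.
  have H0 := @es_abs i v; change (size v) with (@size (nat * bool) v) in H0; rewrite -/e0 in H0; lia.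
have Hcm : forall s' : bool, forall z, cmm (if s' then winv (xg (tau' k) k) else xg (tau' k) k) (rp rho0 z) (2 * Z.abs_nat z).
  move=> s' z; apply: cmm_rp; first exact: XW_rho0.
  case: s'; last exact: cmm_letter_rho.
  by apply: cmm_winvl; [apply: XW_xg => //; apply: tau'_lt | apply: cmm_letter_rho].
have XLS : XW (if s then winv (Delta k) else Delta k).
  by case: (s); rewrite ?XW_winv XW_xg.
have E1 := eqv_catl XLS IH.
have E2 : eqv ((if s then winv (Delta k) else Delta k) ++ rp rho0 e0 ++ Tv)
             (rp rho0 (ex i (k, s) + e0) ++ (if s then winv (xg (tau' k) k) else xg (tau' k) k) ++ Tv)
             (2 * (size v).+1).
  have Hs := Hcm s; move: Hs; clear E1 XLS.
  rewrite /ex /tau' /=; case: (eqVneq k i) => [Eki|nki] Hs.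
  + subst k; case: s Hs => Hs.
    * apply: (eqv_feql (u' := winv (xg p i) ++ rp rho0 (-1 + e0) ++ Tv)).
        have F1 := feq_cat (feq_refl' (winv (xg p i))) (feq_cat (rp_pred rho0 e0) (feq_refl' Tv)).
        by rewrite /feq -F1 /rho0 winv_cat winvK -!catA canc2_0.
      rewrite catA; apply: (eqv_feqr (v' := (rp rho0 (-1 + e0) ++ winv (xg p i)) ++ Tv)).
        by rewrite -catA.
      apply: eqv_catr; apply: cmm_eqv.
      apply: ar_le (Hs (-1 + e0)%Z); rewrite leq_mul2l; apply/orP; right. lia.
    * apply: (eqv_feql (u' := rho0 ++ (xg p i ++ rp rho0 e0) ++ Tv)).
        by rewrite /feq /rho0 -!catA canc2.
      apply: (eqv_feqr (v' := rho0 ++ (rp rho0 e0 ++ xg p i) ++ Tv)).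
        have F1 := feq_cat (rp_succ rho0 e0) (feq_refl' (xg p i ++ Tv)).
        by rewrite /feq -!catA -F1 -!catA.
      apply: eqv_catl; first exact: XW_rho0.
      apply: eqv_catr; apply: cmm_eqv.
      apply: ar_le (Hs e0); rewrite leq_mul2l; apply/orP; right; lia.
  + rewrite Z.add_0_l catA; apply: (eqv_feqr (v' := (rp rho0 e0 ++ (if s then winv (xg k k) else xg k k)) ++ Tv)).
      by rewrite -catA.
    apply: eqv_catr; apply: cmm_eqv.
    apply: ar_le (Hs e0); rewrite leq_mul2l; apply/orP; right; lia.
apply: (eqv_le _ (eqv_trans E1 E2)).
set sv := size v; rewrite !mulnS !mulSn; lia.
Qed.

End ELemma.

Section Reduce.

Lemma all_fc (T : eqType) (P : pred (T * bool)) x (acc : word T) :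
  P x -> all P acc -> all P (fc x acc).
Proof.
move=> Px; case: acc => [|y t] /=; first by rewrite Px.
by case: ifP => _ /andP[Py Pt] //=; rewrite Px Py Pt.
Qed.

Lemma all_fr (T : eqType) (P : pred (T * bool)) (w : word T) : all P w -> all P (freduce w).
Proof.
elim: w => //= x w IH /andP[Px Pw]; rewrite -/(freduce w).
by apply: all_fc => //; apply: IH.
Qed.

Lemma wsubst_fc (S : nat -> word Xgen) x (s : word nat) :
  freduce (wsubst S (fc x s)) = freduce (wsubst S (x :: s)).
Proof.
case: s => [|y t] //=.
case: ifP => // /andP[/eqP E1 E2].
rewrite -/(wsubst S t) !wsubst_cons E1.
case: x E1 E2 => a b; case: y => c d /= E1 E2.
have -> : d = ~~ b by move: E2; case: b; case: d.
case: b {E2} => /=.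
  by rewrite canc2_0.
by rewrite canc1_0.
Qed.

Lemma wsubst_fr (S : nat -> word Xgen) (w : word nat) :
  feq (wsubst S w) (wsubst S (freduce w)).
Proof.
elim: w => // x w IH.
rewrite /feq /= -/(freduce w) wsubst_fc wsubst_cons [in RHS]wsubst_cons.
by rewrite !fr_cat IH.
Qed.

Lemma feq_wcomm (a a' b b' : word Xgen) : feq a a' -> feq b b' -> feq (wcomm a b) (wcomm a' b').
Proof.
move=> Ea Eb; rewrite /wcomm; apply: feq_cat => //; apply: feq_cat => //.
by apply: feq_cat; apply: feq_winv.
Qed.

End Reduce.

Section Main.
Variables n r : nat.
Local Notation XW := (X_word n r).
Local Notation eqv := (eqv n r).
Local Notation cmm := (cmm n r).

Lemma eqv_wcomm_r (u g g' : word Xgen) N : XW u -> XW g -> XW g' -> eqv g g' N ->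
  eqv (wcomm u g) (wcomm u g') (N + N).
Proof.
move=> Xu Xg Xg' E.
apply: eqv_trans.
  apply: eqv_catl => //; apply: eqv_catr; exact: E.
rewrite /wcomm; apply: (eqv_feql (u' := (u ++ g' ++ winv u) ++ winv g)); first by rewrite -!catA.
apply: (eqv_feqr (v' := (u ++ g' ++ winv u) ++ winv g')); first by rewrite -!catA.
apply: eqv_catl; first by rewrite !XW_cat XW_winv Xu Xg'.
exact: eqv_winv.
Qed.

Lemma conj_comm (u u' g : word Xgen) N :
  eqv (u ++ g ++ winv u) (u' ++ g ++ winv u') N ->
  eqv (wcomm u g) (wcomm u' g) N.
Proof.
apply: ar_feq.
rewrite /feq /eqv winv_wcomm /wcomm !winv_cat !winvK -!catA.
by rewrite canc2_3.
Qed.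

Lemma bound_aux (a b : nat) : a * b <= maxn (a ^ 2) (b ^ 2) /\ a * a <= maxn (a ^ 2) (b ^ 2) /\
  b * b <= maxn (a ^ 2) (b ^ 2).
Proof.
have h1 : a * a <= maxn (a ^ 2) (b ^ 2) by rewrite mulnn leq_maxl.
have h2 : b * b <= maxn (a ^ 2) (b ^ 2) by rewrite mulnn leq_maxr.
split; last by split.
case: (leqP a b) => hab.
  by apply: leq_trans h2; rewrite leq_mul2r hab orbT.
by apply: leq_trans h1; rewrite leq_mul2l (ltnW hab) orbT.
Qed.

End Main.

Theorem lemma3p13 (n r : nat) (hnr : r.+2 <= n) :
  exists C : nat, 0 < C /\
    forall (v w : word nat) (i : nat),
      Fr_word r v -> Fr_word r w -> i < n.-1 ->
      (in_comm_Fr r v \/ r <= i) ->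
      area_le n r
        (wcomm (wsubst (Xtuple i) w) (wsubst Delta v) ++
         winv (wcomm (wsubst Delta w) (wsubst Delta v)))
        (C * maxn (wlen w ^ 2) (wlen v ^ 2)).
Proof.
exists 20; split => // v w i Hv Hw hi Hcase.
have hrn : r < n.-1 by rewrite -ltnS prednK //; apply: leq_trans hnr; rewrite ltnS leqW.
set w' := freduce w; set v' := freduce v.
have Hw' : Fr_word r w' by apply: all_fr.
have Hv' : Fr_word r v' by apply: all_fr.
apply: (ar_feq (u := wcomm (wsubst (Xtuple i) w') (wsubst Delta v') ++
         winv (wcomm (wsubst Delta w') (wsubst Delta v')))).
  rewrite /feq; apply: esym; apply: feq_cat; first by apply: feq_wcomm; apply: wsubst_fr.
  by apply: feq_winv; apply: feq_wcomm; apply: wsubst_fr.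
rewrite /wlen -/w' -/v'.
have [Bwv [Bww Bvv]] := bound_aux (size w') (size v').
set M := maxn _ _ in Bwv Bww Bvv *.
have XD : forall k, k < r -> X_word n r (Delta k) by move=> k hk; apply: XW_xg => //; apply: ltn_trans hk hrn.
have Xg : X_word n r (wsubst Delta v') by apply: XW_wsubst.
set g := wsubst Delta v'.
set u := wsubst (Xtuple i) w'.
set u' := wsubst Delta w'.
have Xu : X_word n r u by apply: XW_wsubst => // k hk; apply: XW_xg.
have Xu' : X_word n r u' by apply: XW_wsubst.
have hin : i < n.-1 := hi.
have Sg : size g = size v' := size_wsubst (fun k => k) v'.
case: (leqP r i) => hri.
  pose ok := fun g : Xgen => (g.2 < r) && (g.1 == g.2).
  have L : eqv n r (u ++ g ++ winv u) (u' ++ g ++ winv u') (2 * size w' * (2 * size w' + size g)).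
    apply: (@swap n r (fun _ => i) (fun k => k) ok 2 w' g) => //.
    + by move=> k hk; split => //; apply: ltn_trans hk hrn.
    + move=> k [a m] hk /andP[/= hm /eqP Eam] _; subst a.
      have hmn : m < n.-1 by apply: ltn_trans hm hrn.
      have hkn : k < n.-1 by apply: ltn_trans hk hrn.
      by apply: cmm_sym; apply: CM => //; lia.
    + by move=> k hk; rewrite /ok /= hk eqxx.
    + apply: (all_wsubst (r := r)) => // k hk.
      by rewrite /= /ok /= hk eqxx.
  apply: (ar_le _ (conj_comm L)).
  rewrite Sg; nia.
have Hc : in_comm_Fr r v by case: Hcase => // h; move: hri; rewrite ltnNge h.
have Ees : es i v' = 0%Z by rewrite es_fr; apply: es_comm Hc.
have hrr : r <= r := leqnn r.
have EG := Elem hri hrr hrn Hv'.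
rewrite Ees in EG.
set g' := wsubst (fun k => xg (tau' i r k) k) v' in EG.
have EG' : eqv n r g g' (2 * size v' * size v') := EG.
have Xg' : X_word n r g'.
  by apply: (XW_wsubst (n := n) (r := r)) Hv' => k hk; apply: XW_xg => //; exact: (tau'_lt i hrr hrn hk).
have Sg' : size g' = size v' := size_wsubst (fun k => tau' i r k) v'.
have A := eqv_wcomm_r Xu Xg Xg' EG'.
have B := eqv_wcomm_r Xu' Xg Xg' EG'.
pose ok1 := fun g : Xgen => (g.2 < r) && (g.1 == tau' i r g.2).
have L1 : eqv n r (u ++ g' ++ winv u)
   (wsubst (fun k => xg (tau' i r k) k) w' ++ g' ++ winv (wsubst (fun k => xg (tau' i r k) k) w'))
   (2 * size w' * (2 * size w' + size g')).
  apply: (@swap n r (fun _ => i) (tau' i r) ok1 2 w' g') => //.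
  + by move=> k hk; split => //; exact: (tau'_lt i hrr hrn hk).
  + move=> k [a m] hk /andP[/= hm /eqP Eam] _; subst a.
    have hmn : m < n.-1 by apply: ltn_trans hm hrn.
    have hkn : k < n.-1 by apply: ltn_trans hk hrn.
    apply: cmm_sym; apply: CM => //; try exact: (tau'_lt i hrr hrn hk); try exact: (tau'_lt i hrr hrn hm).
    rewrite /tau'; case: (eqVneq m i) => [Emi|nmi]; case: (eqVneq k i) => [Eki|nki] /=; lia.
  + by move=> k hk; rewrite /ok1 /= hk eqxx.
  + apply: (all_wsubst (r := r)) => // k hk.
    by rewrite /= /ok1 /= hk eqxx.
pose ok2 := fun g : Xgen => (g.2 < r) && ((g.1 == g.2) || (g.1 == tau' i r g.2)).
have L2 : eqv n r
   (wsubst (fun k => xg (tau' i r k) k) w' ++ g' ++ winv (wsubst (fun k => xg (tau' i r k) k) w'))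
   (u' ++ g' ++ winv u')
   (2 * size w' * (2 * size w' + size g')).
  apply: (@swap n r (tau' i r) (fun k => k) ok2 2 w' g') => //.
  + by move=> k hk; split; [exact: (tau'_lt i hrr hrn hk) | apply: ltn_trans hk hrn].
  + move=> k [a m] hk /andP[/= hm Eam] _.
    have hmn : m < n.-1 by apply: ltn_trans hm hrn.
    have hkn : k < n.-1 by apply: ltn_trans hk hrn.
    have han : a < n.-1.
      by case/orP: Eam => /eqP ->; [ | exact: (tau'_lt i hrr hrn hm)].
    apply: cmm_sym; apply: CM => //; try exact: (tau'_lt i hrr hrn hk).
    move: Eam; rewrite /tau'; case: (eqVneq m i) => [Emi|nmi]; case: (eqVneq k i) => [Eki|nki] /=; lia.
  + by move=> k hk; rewrite /ok2 /= hk eqxx.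
  + apply: (all_wsubst (r := r)) => // k hk.
    by rewrite /= /ok2 /= hk eqxx orbT.
have Mid := conj_comm (eqv_trans L1 L2).
have Tot := eqv_trans A (eqv_trans Mid (eqv_sym B)).
apply: (ar_le _ Tot).
rewrite Sg'; nia.
Qed.
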